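(* Let $f\in\mathcal{F}_{1,1}$ and let $t,T$ be positive integers. There exists a function $\widetilde f:[0,1]\to\mathbb{R}$ such that: (i) $\widetilde f$ is continuous and Lipschitz with constant $1$; (ii) $\widetilde f(\frac iT)=\left\lceil Tf(\frac iT)/2^{-t}\right\rceil\frac{2^{-t}}{T}$ for $i=0,1,\dots,T$; (iii) $|\widetilde f(x)-f(x)|<\frac{2^{-t}}{T}$ for all $x\in[0,1]$.
   Context: $\mathcal{F}_{1,1}$ is the set of functions $f\in\mathscr{W}^{1,\infty}([0,1])$ (identified with their continuous representatives) with $\operatorname{ess\,sup}|f|\le1$ and $\operatorname{ess\,sup}|f'|\le1$. *)

(* Defs.v *)
From HB Require Import structures.
From mathcomp Require Import all_boot all_order all_algebra.
From mathcomp Require Import all_classical all_reals all_analysis.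
Set Implicit Arguments. Unset Strict Implicit. Unset Printing Implicit Defensive.
Import Order.TTheory GRing.Theory Num.Theory.
Import numFieldNormedType.Exports.
Local Open Scope classical_set_scope.
Local Open Scope ring_scope.

(* A function on [0,1] is represented by a total function R -> R of which only
   the values on [0,1] matter. *)

Definition lipschitz01 {R : realType} (L : R) (g : R -> R) : Prop :=
  forall x y : R, x \in `[0, 1] -> y \in `[0, 1] -> `|g x - g y| <= L * `|x - y|.

(* F_{1,1}: (continuous representatives of) W^{1,oo}([0,1]) functions with
   ess sup |f| <= 1 and ess sup |f'| <= 1.  For the continuous representative
   on an interval this is: |f| <= 1 on [0,1] and f is 1-Lipschitz on [0,1]. *)
Definition F11 {R : realType} (f : R -> R) : Prop :=
  (forall x : R, x \in `[0, 1] -> `|f x| <= 1) /\ lipschitz01 1 f.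

(* Main.v *)
Require Import Defs.
From HB Require Import structures.
From mathcomp Require Import all_boot all_order all_algebra.
From mathcomp Require Import all_classical all_reals all_analysis.
From mathcomp Require Import ring lra.
Import Order.TTheory GRing.Theory Num.Theory.
Import numFieldNormedType.Exports.
Local Open Scope classical_set_scope.
Local Open Scope ring_scope.

Lemma lip_cont (R : realType) (g : R -> R) :
  (forall x y, g x <= g y + `|x - y|) -> continuous g.
Proof.
move=> H x; apply/cvgrPdist_lt => e e0.
near=> y.
have h1 := H x y; have h2 := H y x.
have : `|g x - g y| <= `|x - y|.
  rewrite distrC in h2.
  rewrite ler_norml; apply/andP; split; lra.
move/le_lt_trans; apply.
near: y.
apply/nbhs_normP; exists e => //= y; rewrite /ball_ /= distrC.
Unshelve. all: by end_near.
Qed.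

Lemma lip_abs (R : realType) (g : R -> R) x y :
  (forall x y, g x <= g y + `|x - y|) -> `|g x - g y| <= `|x - y|.
Proof.
move=> H; have h1 := H x y; have h2 := H y x.
rewrite distrC in h2.
rewrite ler_norml; apply/andP; split; lra.
Qed.

Lemma max_lip (R : realType) (a1 a2 b1 b2 d : R) :
  a1 <= b1 + d -> a2 <= b2 + d -> Num.max a1 a2 <= Num.max b1 b2 + d.
Proof.
move=> h1 h2; rewrite ge_max; apply/andP; split.
  by apply: (le_trans h1); rewrite lerD2r le_max lexx.
by apply: (le_trans h2); rewrite lerD2r le_max lexx orbT.
Qed.

Lemma min_lip (R : realType) (a1 a2 b1 b2 d : R) :
  a1 <= b1 + d -> a2 <= b2 + d -> Num.min a1 a2 <= Num.min b1 b2 + d.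
Proof.
move=> h1 h2; case: (leP b1 b2) => _.
  by rewrite ge_min h1.
by rewrite ge_min h2 orbT.
Qed.

Fixpoint Lmax {R : realType} (F : nat -> R) (n : nat) : R :=
  match n with 0 => F 0%N | m.+1 => Num.max (Lmax F m) (F m.+1) end.

Lemma Lmax_ge (R : realType) (F : nat -> R) n i : (i <= n)%N -> F i <= Lmax F n.
Proof.
elim: n => [|n IH] /=; first by rewrite leqn0 => /eqP ->.
rewrite leq_eqVlt => /orP [/eqP ->|h]; first by rewrite le_max lexx orbT.
by rewrite le_max IH.
Qed.

Lemma Lmax_le (R : realType) (F : nat -> R) n c :
  (forall i, (i <= n)%N -> F i <= c) -> Lmax F n <= c.
Proof.
elim: n => [|n IH] H /=; first exact: H.
rewrite ge_max IH ?H // => i hi; apply: H; exact: leqW.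
Qed.

Lemma Lmax_lt (R : realType) (F : nat -> R) n c :
  (forall i, (i <= n)%N -> F i < c) -> Lmax F n < c.
Proof.
elim: n => [|n IH] H /=; first exact: H.
rewrite gt_max IH ?H // => i hi; apply: H; exact: leqW.
Qed.

Lemma Lmax_lip (R : realType) (F G : nat -> R) n d :
  (forall i, F i <= G i + d) -> Lmax F n <= Lmax G n + d.
Proof.
move=> H; elim: n => [|n IH] /=; first exact: H.
exact: max_lip.
Qed.

Lemma dist_nat (R : realType) (i j : nat) : exists k : nat, `|(i%:R - j%:R : R)| = k%:R.
Proof.
case: (leqP i j) => h.
  exists (j - i)%N; rewrite distrC natrB // ger0_norm //.
  by rewrite subr_ge0 ler_nat.
exists (i - j)%N; rewrite natrB ?(ltnW h) // ger0_norm //.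
by rewrite subr_ge0 ler_nat ltnW.
Qed.

Lemma latt (R : realType) (y z d : R) (N : nat) : 0 < d ->
  y <= z + N%:R * d ->
  (Num.ceil (y / d))%:~R * d <= (Num.ceil (z / d))%:~R * d + N%:R * d.
Proof.
move=> d0 h.
rewrite -mulrDl ler_pM2r //.
have : (Num.ceil (y / d) <= Num.ceil (z / d) + N%:Z)%R.
  rewrite ceil_le_int rmorphD /=.
  apply: (le_trans (y:= z / d + N%:R)).
    rewrite ler_pdivrMr // mulrDl divfK ?gt_eqF //.
  rewrite lerD2r; exact: ceil_ge.
by rewrite -(ler_int R) rmorphD.
Qed.

Theorem proposition4 (R : realType) (f : R -> R) (t T : nat) :
  F11 f -> (0 < t)%N -> (0 < T)%N ->
  exists ft : R -> R,
    [/\ {within `[0, 1], continuous ft} /\ lipschitz01 1 ft,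
        (forall i : nat, (i <= T)%N ->
           ft (i%:R / T%:R) =
           (Num.ceil (T%:R * f (i%:R / T%:R) / (2 ^- t)))%:~R * ((2 ^- t) / T%:R))
      & (forall x : R, x \in `[0, 1] -> `|ft x - f x| < (2 ^- t) / T%:R)].
Proof.
move=> [fb fl] t0 T0.
have Tr0 : (0 : R) < T%:R by rewrite ltr0n.
have s0 : (0 : R) < 2 ^- t by rewrite invr_gt0 exprn_gt0.
set d := (2 ^- t) / T%:R.
have d0 : 0 < d by rewrite divr_gt0.
have Ev : forall y, T%:R * y / (2 ^- t) = y / d.
  move=> y; rewrite /d; field; apply/andP; split; by rewrite gt_eqF.
set xi := fun i : nat => i%:R / (T%:R : R).
set v := fun i : nat => (Num.ceil (f (xi i) / d))%:~R * d.
set c := fun x : R => Num.max 0 (Num.min x 1).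
set ft := fun x : R =>
  Num.max (f (c x)) (Lmax (fun i => v i - `|x - xi i|) T).
have cid : forall x, x \in `[0, 1] -> c x = x.
  move=> x; rewrite in_itv /= => /andP [h0 h1].
  by rewrite /c (min_l h1) (max_r h0).
have c01 : forall x, c x \in `[0, 1].
  move=> x; rewrite in_itv /= /c le_max lexx /= ge_max ler01 /= ge_min lexx orbT.
  by [].
have cl : forall x y, c x <= c y + `|x - y|.
  move=> x y; rewrite /c; apply: max_lip; first by rewrite add0r normr_ge0.
  apply: min_lip; last by rewrite lerDl normr_ge0.
  by rewrite -lerBlDl ler_norm.
have fl1 : forall x y, x \in `[0, 1] -> y \in `[0, 1] -> f x <= f y + `|x - y|.
  move=> x y hx hy; have := fl x y hx hy; rewrite mul1r => /ler_normlP [_ h].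
  by rewrite -lerBlDl.
have ftl : forall x y, ft x <= ft y + `|x - y|.
  move=> x y; apply: max_lip.
    apply: (le_trans (fl1 _ _ (c01 x) (c01 y))); rewrite lerD2l.
    exact: lip_abs.
  apply: Lmax_lip => i.
  have : `|y - xi i| <= `|x - xi i| + `|x - y|.
    have -> : y - xi i = (y - x) + (x - xi i) by ring.
    apply: (le_trans (ler_normD _ _)); by rewrite (distrC y x) addrC.
  lra.
have xi01 : forall i, (i <= T)%N -> xi i \in `[0, 1].
  move=> i hi; rewrite in_itv /= /xi divr_ge0 ?ler0n //=.
  by rewrite ler_pdivrMr // mul1r ler_nat.
have va : forall i, f (xi i) <= v i.
  move=> i; rewrite /v -ler_pdivrMr //; exact: ceil_ge.
have vb : forall i, v i < f (xi i) + d.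
  move=> i; rewrite /v; have h := ceilB1_lt (f (xi i) / d).
  rewrite rmorphB /= in h.
  have h2 : ((Num.ceil (f (xi i) / d))%:~R - 1) * d < f (xi i) by rewrite -ltr_pdivlMr.
  rewrite mulrBl mul1r in h2; lra.
have vc : forall i j, (i <= T)%N -> (j <= T)%N -> v j <= v i + `|xi i - xi j|.
  move=> i j hi hj.
  have [k hk] := dist_nat R i j.
  have E : `|xi i - xi j| = (k * 2 ^ t)%N%:R * d.
    rewrite /xi -mulrBl normrM hk gtr0_norm ?invr_gt0 // /d natrM natrX.
    field; rewrite gt_eqF //= expf_neq0 //.
  rewrite E; apply: latt => //; rewrite -E.
  rewrite distrC; exact: fl1 (xi01 _ hj) (xi01 _ hi).
exists ft; split.
- split.
    apply: continuous_subspaceT; exact: lip_cont.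
  move=> x y _ _; rewrite mul1r; exact: lip_abs.
- move=> i hi; rewrite Ev -/(xi i) -/(v i).
  rewrite /ft cid ?xi01 //.
  have hL : Lmax (fun j => v j - `|xi i - xi j|) T = v i.
    apply/le_anti/andP; split.
      apply: Lmax_le => j hj; have := vc i j hi hj; lra.
    have := @Lmax_ge R (fun j => v j - `|xi i - xi j|) T i hi.
    by rewrite /= subrr normr0 subr0.
  rewrite hL; apply: max_r; exact: va.
- move=> x hx; rewrite /ft cid //.
  have hge : f x <= Num.max (f x) (Lmax (fun i => v i - `|x - xi i|) T).
    by rewrite le_max lexx.
  rewrite ger0_norm ?subr_ge0 // ltrBlDl gt_max; apply/andP; split.
    first [by rewrite ltrDl | by rewrite ltrDr | by rewrite addrC ltrDl | by rewrite addrC ltrDr].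
  apply: Lmax_lt => i hi.
  have := vb i; have := fl1 _ _ (xi01 _ hi) hx.
  rewrite distrC; move: (normr_ge0 (x - xi i)); lra.
Qed.
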